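(* Let $G$ be a group generated by involutions (elements $i$ with $i^2=e$) and $H$ an abelian group (written additively). Assume $f:G\to H$ satisfies $f(xy)+f(xy^{-1})=2f(x)$ for all $x,y\in G$, with $f(e)=0$. Then: (I) $f(xyz)=f(xzy)$ for all $x,y,z\in G$. (II) Consequently, for any word $g=i_1\cdots i_r$ in involutions, swapping any adjacent pair $i_k,i_{k+1}$ does not change the value $f(g)$. *)

(* Defs.v *)
From HB Require Import structures.
From mathcomp Require Import all_boot all_algebra.
Set Implicit Arguments. Unset Strict Implicit. Unset Printing Implicit Defensive.
Import GRing.Theory.

Definition is_group (G : Type) (mul : G -> G -> G) (inv : G -> G) (e : G) : Prop :=
  (forall x y z, mul x (mul y z) = mul (mul x y) z) /\
  (forall x, mul e x = x) /\ (forall x, mul x e = x) /\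
  (forall x, mul x (inv x) = e) /\ (forall x, mul (inv x) x = e).

Definition involution (G : Type) (mul : G -> G -> G) (e : G) (i : G) : Prop :=
  mul i i = e.

Definition word_prod (G : Type) (mul : G -> G -> G) (e : G) (s : seq G) : G :=
  foldr mul e s.

Definition involution_word (G : Type) (mul : G -> G -> G) (e : G) (s : seq G) : Prop :=
  foldr (fun i P => involution mul e i /\ P) True s.

(* G is generated by involutions: since involutions are self-inverse, the
   generated subgroup consists exactly of finite products of involutions. *)
Definition generated_by_involutions (G : Type) (mul : G -> G -> G) (e : G) : Prop :=
  forall g : G, exists s : seq G, involution_word mul e s /\ g = word_prod mul e s.

(* Main.v *)
Require Import Defs.
From HB Require Import structures.
From mathcomp Require Import all_boot all_algebra.
Local Open Scope ring_scope.
Import GRing.Theory.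
Set Implicit Arguments. Unset Strict Implicit.

Lemma inv_uniq (G : Type) (mul : G -> G -> G) (inv : G -> G) (e : G)
  (hG : is_group mul inv e) (u v : G) : mul u v = e -> v = inv u.
Proof.
case: hG => mA [m1l [m1r [mV mVl]]] huv.
by rewrite -[v]m1l -(mVl u) -mA huv m1r.
Qed.

Lemma base (G : Type) (mul : G -> G -> G) (inv : G -> G) (e : G)
  (H : zmodType) (f : G -> H)
  (hG : is_group mul inv e)
  (hf : forall x y : G, f (mul x y) + f (mul x (inv y)) = f x *+ 2)
  (hfe : f e = 0) (i y : G) : involution mul e i ->
  f (mul i y) = f (mul y i).
Proof.
move=> hi.
have hG' := hG.
case: hG' => mA [m1l [m1r [mV mVl]]].
have finv u : f (inv u) = - f u.
  have := hf e u; rewrite !m1l hfe mul0rn => /eqP.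
  by rewrite addr_eq0 => /eqP ->; rewrite opprK.
have ii : inv i = i by apply: esym; apply: (inv_uniq hG).
have hinv : inv (mul y i) = mul i (inv y).
  apply: esym; apply: (inv_uniq hG).
  by rewrite -mA (mA i) hi m1l mV.
have h2 : f i *+ 2 = 0.
  have := hf e i; rewrite !m1l hfe mul0rn ii => <-; by [].
have := hf i y; rewrite h2 -hinv finv => /eqP.
by rewrite subr_eq0 => /eqP.
Qed.

Lemma commw (G : Type) (mul : G -> G -> G) (inv : G -> G) (e : G)
  (H : zmodType) (f : G -> H)
  (hG : is_group mul inv e)
  (hf : forall x y : G, f (mul x y) + f (mul x (inv y)) = f x *+ 2)
  (hfe : f e = 0) (s : seq G) : involution_word mul e s ->
  forall y, f (mul y (word_prod mul e s)) = f (mul (word_prod mul e s) y).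
Proof.
have hG' := hG.
case: hG' => mA [m1l [m1r [mV mVl]]].
elim: s => [|i s IH] /=.
  by move=> _ y; rewrite /word_prod /= m1l m1r.
case=> hi hs y.
rewrite /word_prod /= -/(word_prod mul e s).
by rewrite mA IH // -mA (base hG hf hfe _ hi) mA.
Qed.

Lemma trans (G : Type) (mul : G -> G -> G) (inv : G -> G) (e : G)
  (H : zmodType) (f : G -> H)
  (hG : is_group mul inv e)
  (hgen : generated_by_involutions mul e)
  (hf : forall x y : G, f (mul x y) + f (mul x (inv y)) = f x *+ 2)
  (hfe : f e = 0) (x y z : G) :
  f (mul x (mul y z)) = f (mul x (mul z y)).
Proof.
have hG' := hG.
case: hG' => mA [m1l [m1r [mV mVl]]].
pose g v := f (mul x v) - f x.
have hg : forall u v : G, g (mul u v) + g (mul u (inv v)) = g u *+ 2.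
  move=> u v; rewrite /g !mA.
  by rewrite addrACA hf mulrnBl [f x *+ 2]mulr2n opprD.
have hge : g e = 0 by rewrite /g m1r subrr.
case: (hgen z) => s [hs ->].
have := commw hG hg hge hs y.
by rewrite /g => /eqP; rewrite (can2_eq (subrK _) (addrK _)) subrK => /eqP.
Qed.

Lemma word_prod_cat (G : Type) (mul : G -> G -> G) (inv : G -> G) (e : G)
  (hG : is_group mul inv e) (s1 s2 : seq G) :
  word_prod mul e (s1 ++ s2) = mul (word_prod mul e s1) (word_prod mul e s2).
Proof.
have hG' := hG.
case: hG' => mA [m1l [m1r [mV mVl]]].
elim: s1 => [|a s IH] /=; first by rewrite /word_prod /= m1l.
by rewrite /word_prod /= -!/(word_prod mul e _) IH mA.
Qed.

Theorem mainTheorem4 (G : Type) (mul : G -> G -> G) (inv : G -> G) (e : G)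
  (H : zmodType) (f : G -> H)
  (hG : is_group mul inv e)
  (hgen : generated_by_involutions mul e)
  (hf : forall x y : G, f (mul x y) + f (mul x (inv y)) = f x *+ 2)
  (hfe : f e = 0) :
  (forall x y z : G, f (mul (mul x y) z) = f (mul (mul x z) y)) /\
  (forall (s1 s2 : seq G) (a b : G),
     involution_word mul e (s1 ++ a :: b :: s2) ->
     f (word_prod mul e (s1 ++ a :: b :: s2)) =
     f (word_prod mul e (s1 ++ b :: a :: s2))).
Proof.
have hG' := hG.
case: hG' => mA [m1l [m1r [mV mVl]]].
have T := trans hG hgen hf hfe.
split.
  by move=> x y z; rewrite -!mA T.
move=> s1 s2 a b _.
rewrite !(word_prod_cat hG) /word_prod /= -!/(word_prod mul e _).
set P := word_prod mul e s1; set W := word_prod mul e s2.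
rewrite (mA a b W) (mA b a W).
rewrite (T P (mul a b) W) (mA P W (mul a b)) (T (mul P W) a b).
by rewrite -(mA P W) (T P W).
Qed.
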